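(* Let $S\ge 2$, $m\ge 1$ and $n_1,\ldots,n_S\ge 1$ be integers, and put $n=\sum_{s=1}^S n_s$. Let $x_{sij}\in\mathbb{R}$ for $s=1,\ldots,S$, $i=1,\ldots,m$, $j=1,\ldots,n_s$. Let $\sigma_1^2,\ldots,\sigma_m^2>0$ and $\alpha_1,\ldots,\alpha_m>0$ be fixed constants. Consider the objective $$f(\mu,\gamma,d)=\sum_{i=1}^m\frac{1}{2\sigma_i^2}\Big(\sum_{j=1}^{n_1}(x_{1ij}-\mu_i-d_{1j})^2+\sum_{s=2}^S\sum_{j=1}^{n_s}(x_{sij}-\mu_i-\gamma_{si}-d_{sj})^2\Big)+\sum_{i=1}^m\alpha_i\,\mathbf{1}\Big(\sum_{s=2}^S|\gamma_{si}|>0\Big).$$ Here the variables are $\mu=(\mu_i)_{i=1}^m\in\mathbb{R}^m$, $\gamma=(\gamma_{si})_{2\le s\le S,\,1\le i\le m}$ with real entries, and $d=(d_{sj})_{1\le s\le S,\,1\le j\le n_s}$ with real entries. The objective $f$ is to be minimized subject to the constraint $d_{11}=0$. Define the following quantities: - for $s=1,\ldots,S$ and $j=1,\ldots,n_s$, $$d'_{sj}=\frac{\sum_{i=1}^m (x_{sij}-x_{si1})/\sigma_i^2}{\sum_{i=1}^m 1/\sigma_i^2};$$ - for $s=1,\ldots,S$ and $i=1,\ldots,m$, $$\mu'_{si}=\frac{1}{n_s}\sum_{j=1}^{n_s}(x_{sij}-d'_{sj}).$$ With the convention $d_1=0$, define for each $i$ the function of $(d_2,\ldots,d_S)\in\mathbb{R}^{S-1}$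 $$g_i(d_2,\ldots,d_S)=\frac{1}{2\sigma_i^2}\Big\{\sum_{s=1}^S n_s(\mu'_{si}-d_s)^2-\frac1n\Big[\sum_{s=1}^S n_s(\mu'_{si}-d_s)\Big]^2\Big\},$$ and put $$G(d_2,\ldots,d_S)=\sum_{i=1}^m\min\big(g_i(d_2,\ldots,d_S),\alpha_i\big).$$ Let $(d_2,\ldots,d_S)$ be any minimizer of $G$ over $\mathbb{R}^{S-1}$, and set $d_1=0$. Define: - $d_{sj}=d_s+d'_{sj}$ for all $s,j$; - for each $i$ with $g_i(d_2,\ldots,d_S)<\alpha_i$: $\gamma_{si}=0$ for $s=2,\ldots,S$, and $\mu_i=\frac1n\sum_{s=1}^S n_s(\mu'_{si}-d_s)$; - for each $i$ with $g_i(d_2,\ldots,d_S)\ge\alpha_i$: $\gamma_{si}=\mu'_{si}-\mu'_{1i}-d_s$ for $s=2,\ldots,S$, and $\mu_i=\mu'_{1i}$. Then the triple $(\mu,\gamma,d)$ so defined satisfies $d_{11}=0$ and is a global minimizer of $f$ among all $(\mu,\gamma,d)$ with $d_{11}=0$.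
   Context: This is the penalized (L0) negative log-likelihood for the model $x_{sij}\sim N(\mu_i+\gamma_{si}\mathbf 1(s\ge2)+d_{sj},\sigma_i^2)$ with known variances. $\mathbf{1}(\cdot)$ denotes the indicator function. *)

(* Defs.v *)
From Stdlib Require Import Reals Lra.
Open Scope R_scope.

(* Indices are 0-based: group s in {0..S-1} (paper's s = s+1),
   feature i in {0..m-1}, sample j in {0..ns s - 1}. *)

Fixpoint sumR (n : nat) (f : nat -> R) : R :=
  match n with
  | O => 0
  | S k => sumR k f + f k
  end.

Definition ind_pos (a : R) : R := if Rlt_dec 0 a then 1 else 0.

Section Model.
Variables (S m : nat) (ns : nat -> nat) (x : nat -> nat -> nat -> R)
          (sigma2 alpha : nat -> R).

Definition ntot : R := sumR S (fun s => INR (ns s)).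

(* objective f(mu, gamma, d); gamma s i used only for s >= 1 (paper s >= 2) *)
Definition objective (mu : nat -> R) (gamma : nat -> nat -> R)
  (d : nat -> nat -> R) : R :=
  sumR m (fun i =>
    / (2 * sigma2 i) *
    ( sumR (ns 0%nat) (fun j => (x 0%nat i j - mu i - d 0%nat j) ^ 2)
    + sumR (S - 1) (fun s' => let s := (s' + 1)%nat in
        sumR (ns s) (fun j => (x s i j - mu i - gamma s i - d s j) ^ 2))))
  + sumR m (fun i =>
      alpha i * ind_pos (sumR (S - 1) (fun s' => Rabs (gamma (s' + 1)%nat i)))).

Definition dprime (s j : nat) : R :=
  sumR m (fun i => (x s i j - x s i 0%nat) / sigma2 i) / sumR m (fun i => / sigma2 i).

Definition muprime (s i : nat) : R :=
  / INR (ns s) * sumR (ns s) (fun j => x s i j - dprime s j).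

Definition dconv (D : nat -> R) (s : nat) : R :=
  match s with O => 0 | _ => D s end.

Definition g_i (i : nat) (D : nat -> R) : R :=
  / (2 * sigma2 i) *
  ( sumR S (fun s => INR (ns s) * (muprime s i - dconv D s) ^ 2)
  - / ntot * (sumR S (fun s => INR (ns s) * (muprime s i - dconv D s))) ^ 2).

Definition G (D : nat -> R) : R :=
  sumR m (fun i => Rmin (g_i i D) (alpha i)).

Definition d_hat (D : nat -> R) (s j : nat) : R := dconv D s + dprime s j.

Definition gamma_hat (D : nat -> R) (s i : nat) : R :=
  if Rlt_dec (g_i i D) (alpha i) then 0
  else muprime s i - muprime 0%nat i - dconv D s.

Definition mu_hat (D : nat -> R) (i : nat) : R :=
  if Rlt_dec (g_i i D) (alpha i)
  then / ntot * sumR S (fun s => INR (ns s) * (muprime s i - dconv D s))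
  else muprime 0%nat i.

End Model.

(* Main.v *)
Require Import Defs.
From Stdlib Require Import Reals Lra Lia.
Open Scope R_scope.

Lemma sumR_ext n f g : (forall k, (k < n)%nat -> f k = g k) -> sumR n f = sumR n g.
Proof. induction n; simpl; intros H; auto. rewrite IHn, H; auto. Qed.

Lemma sumR_plus n f g : sumR n (fun k => f k + g k) = sumR n f + sumR n g.
Proof. induction n; simpl; [lra|rewrite IHn; lra]. Qed.

Lemma sumR_scal n c f : sumR n (fun k => c * f k) = c * sumR n f.
Proof. induction n; simpl; [lra|rewrite IHn; lra]. Qed.

Lemma sumR_const n c : sumR n (fun _ => c) = INR n * c.
Proof. induction n; simpl sumR; [simpl; lra|rewrite IHn, S_INR; lra]. Qed.

Lemma sumR_le n f g : (forall k, (k < n)%nat -> f k <= g k) -> sumR n f <= sumR n g.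
Proof. induction n; simpl; intros H; [lra|]. assert (f n <= g n) by auto. assert (sumR n f <= sumR n g) by auto. lra. Qed.

Lemma sumR_swap n p f : sumR n (fun i => sumR p (fun j => f i j)) = sumR p (fun j => sumR n (fun i => f i j)).
Proof. induction n; simpl. { symmetry; induction p; simpl; auto; rewrite IHp; lra. }
 rewrite IHn, <- sumR_plus. reflexivity. Qed.

Lemma sumR_shift n f : sumR (S n) f = f O + sumR n (fun k => f (S k)).
Proof. induction n; simpl in *; [lra|]. rewrite IHn. lra. Qed.

Lemma sumR_zero n f : (forall k, (k < n)%nat -> f k = 0) -> sumR n f = 0.
Proof. intros H. rewrite (sumR_ext n f (fun _ => 0)) by auto. rewrite sumR_const. lra. Qed.

Lemma sumR_nonneg n f : (forall k, (k < n)%nat -> 0 <= f k) -> 0 <= sumR n f.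
Proof. intros H. rewrite <- (sumR_zero n (fun _ => 0)) by auto. apply sumR_le; auto. Qed.

Lemma sumR_ge_term n f k : (forall k, (k < n)%nat -> 0 <= f k) -> (k < n)%nat -> f k <= sumR n f.
Proof. induction n; intros H Hk; [lia|]. simpl. destruct (Nat.eq_dec k n).
 - subst. assert (0 <= sumR n f) by (apply sumR_nonneg; auto). lra.
 - assert (f k <= sumR n f) by (apply IHn; auto; lia). assert (0 <= f n) by auto. lra. Qed.


Lemma var_lb n (u : R) (v : nat -> R) : (1 <= n)%nat ->
  INR n * (u - / INR n * sumR n v) ^ 2 <= sumR n (fun j => (u - v j) ^ 2).
Proof.
  intros Hn. set (vb := / INR n * sumR n v).
  assert (Hpos : 0 < INR n) by (apply lt_0_INR; lia).
  assert (Hv : sumR n v = INR n * vb) by (unfold vb; field; lra).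
  set (K := (u-vb)^2 + 2*(u-vb)*vb). set (c := -2*(u-vb)).
  rewrite (sumR_ext n _ (fun j => ((v j - vb)^2 + K) + c * v j))
    by (intros; unfold K, c; ring).
  rewrite !sumR_plus, (sumR_const n K), (sumR_scal n c v), Hv. unfold K, c.
  assert (0 <= sumR n (fun j => (v j - vb)^2)) by (apply sumR_nonneg; intros; apply pow2_ge_0).
  nra.
Qed.

Lemma quad_id S (nn a : nat -> R) M :
  sumR S (fun s => nn s * (a s - M) ^ 2) =
  sumR S (fun s => nn s * a s ^ 2) - 2 * M * sumR S (fun s => nn s * a s) + M ^ 2 * sumR S nn.
Proof.
  rewrite (sumR_ext S _ (fun s => (nn s * a s ^ 2 + (-2*M) * (nn s * a s)) + M^2 * nn s)) by (intros; ring).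
  rewrite !sumR_plus, !sumR_scal. ring.
Qed.

Lemma quad_lb S (nn a : nat -> R) M : 0 < sumR S nn ->
  sumR S (fun s => nn s * a s ^ 2) - / sumR S nn * (sumR S (fun s => nn s * a s)) ^ 2
  <= sumR S (fun s => nn s * (a s - M) ^ 2).
Proof.
  intros HN. rewrite quad_id.
  set (N := sumR S nn) in *. set (A := sumR S (fun s => nn s * a s)).
  set (Q := sumR S (fun s => nn s * a s ^ 2)).
  assert (Q - 2 * M * A + M ^ 2 * N - (Q - / N * A ^ 2) = (M * N - A)^2 / N) by (field; lra).
  assert (0 <= (M * N - A)^2 / N) by (unfold Rdiv; apply Rmult_le_pos; [apply pow2_ge_0|left; apply Rinv_0_lt_compat; lra]).
  lra.
Qed.

Lemma quad_eq S (nn a : nat -> R) : 0 < sumR S nn ->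
  sumR S (fun s => nn s * (a s - / sumR S nn * sumR S (fun s => nn s * a s)) ^ 2) =
  sumR S (fun s => nn s * a s ^ 2) - / sumR S nn * (sumR S (fun s => nn s * a s)) ^ 2.
Proof.
  intros HN. rewrite quad_id.
  set (N := sumR S nn) in *. set (A := sumR S (fun s => nn s * a s)). field. lra.
Qed.

Lemma F1 m ns x sigma2 s i : (1 <= ns s)%nat ->
  sumR (ns s) (fun j => x s i j - muprime m ns x sigma2 s i - dprime m x sigma2 s j) = 0.
Proof.
  intros Hn. assert (Hpos : 0 < INR (ns s)) by (apply lt_0_INR; lia).
  unfold muprime.
  set (T := sumR (ns s) (fun j => x s i j - dprime m x sigma2 s j)).
  set (K := - (/ INR (ns s) * T)).
  rewrite (sumR_ext _ _ (fun j => (x s i j - dprime m x sigma2 s j) + K)) by (intros; unfold K; ring).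
  rewrite sumR_plus, sumR_const. fold T. unfold K. field. lra.
Qed.

Lemma Wpos m (sigma2 : nat -> R) : (1 <= m)%nat -> (forall i, (i < m)%nat -> 0 < sigma2 i) ->
  0 < sumR m (fun i => / sigma2 i).
Proof.
  intros Hm Hs. destruct m as [|m]; [lia|]. simpl.
  assert (0 <= sumR m (fun i => / sigma2 i)) by (apply sumR_nonneg; intros; left; apply Rinv_0_lt_compat; apply Hs; lia).
  assert (0 < / sigma2 m) by (apply Rinv_0_lt_compat; apply Hs; lia). lra.
Qed.

Lemma P_j m x sigma2 s j : 0 < sumR m (fun i => / sigma2 i) ->
  sumR m (fun i => / sigma2 i * (x s i j - dprime m x sigma2 s j)) = sumR m (fun i => / sigma2 i * x s i 0%nat).
Proof.
  intros HW. set (W := sumR m (fun i => / sigma2 i)) in *.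
  set (dd := dprime m x sigma2 s j).
  assert (Hd : dd * W = sumR m (fun i => / sigma2 i * x s i j) - sumR m (fun i => / sigma2 i * x s i 0%nat)).
  { unfold dd, dprime. fold W.
    rewrite (sumR_ext _ (fun i => (x s i j - x s i 0%nat) / sigma2 i)
        (fun i => / sigma2 i * x s i j + (-1) * (/ sigma2 i * x s i 0%nat))) by (intros; unfold Rdiv; ring).
    rewrite sumR_plus, sumR_scal. field. lra. }
  rewrite (sumR_ext _ _ (fun i => / sigma2 i * x s i j + (- dd) * / sigma2 i)) by (intros; ring).
  rewrite sumR_plus, sumR_scal. fold W. lra.
Qed.

Lemma F2 m ns x sigma2 s j : (1 <= ns s)%nat -> 0 < sumR m (fun i => / sigma2 i) ->
  sumR m (fun i => / sigma2 i * (x s i j - muprime m ns x sigma2 s i - dprime m x sigma2 s j)) = 0.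
Proof.
  intros Hn HW. assert (Hpos : 0 < INR (ns s)) by (apply lt_0_INR; lia).
  set (C := sumR m (fun i => / sigma2 i * x s i 0%nat)).
  assert (HM : sumR m (fun i => / sigma2 i * muprime m ns x sigma2 s i) = C).
  { unfold muprime.
    rewrite (sumR_ext _ _ (fun i => / INR (ns s) * sumR (ns s) (fun j => / sigma2 i * (x s i j - dprime m x sigma2 s j)))).
    2:{ intros. rewrite sumR_scal. ring. }
    rewrite sumR_scal, sumR_swap.
    rewrite (sumR_ext _ _ (fun _ => C)) by (intros; apply P_j; auto).
    rewrite sumR_const. field. lra. }
  rewrite (sumR_ext _ _ (fun i => / sigma2 i * (x s i j - dprime m x sigma2 s j) + (-1) * (/ sigma2 i * muprime m ns x sigma2 s i)))
    by (intros; ring).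
  rewrite sumR_plus, sumR_scal, HM, P_j by auto. fold C. ring.
Qed.

Lemma cross_zero (m S : nat) (ns : nat -> nat) (c : nat -> R) (E : nat->nat->nat->R) (U V : nat->nat->R) :
 (forall s i, (s<S)%nat -> (i<m)%nat -> sumR (ns s) (fun j => E s i j) = 0) ->
 (forall s j, (s<S)%nat -> sumR m (fun i => c i * E s i j) = 0) ->
 sumR m (fun i => c i * sumR S (fun s => sumR (ns s) (fun j => E s i j * (U s i - V s j)))) = 0.
Proof.
  intros H1 H2.
  rewrite (sumR_ext m _ (fun i => sumR S (fun s => sumR (ns s) (fun j => c i * U s i * E s i j))
       + (-1) * sumR S (fun s => sumR (ns s) (fun j => V s j * (c i * E s i j))))).
  2:{ intros i Hi. rewrite <- sumR_scal, <- sumR_scal, <- sumR_plus. apply sumR_ext; intros s Hs.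
      rewrite <- !sumR_scal, <- sumR_plus. apply sumR_ext; intros; ring. }
  rewrite sumR_plus, sumR_scal.
  rewrite (sumR_zero m (fun i => sumR S _)).
  2:{ intros i Hi. apply sumR_zero. intros s Hs. rewrite sumR_scal. rewrite H1 by auto. ring. }
  rewrite sumR_swap.
  rewrite (sumR_zero S).
  2:{ intros s Hs. rewrite sumR_swap. apply sumR_zero. intros j Hj. rewrite sumR_scal, H2 by auto. ring. }
  ring.
Qed.

Definition theta (mu : nat -> R) (gamma : nat -> nat -> R) (s i : nat) : R :=
  mu i + match s with O => 0 | _ => gamma s i end.

Lemma obj_reshape S m ns x sigma2 alpha mu gamma d : (1 <= S)%nat ->
 objective S m ns x sigma2 alpha mu gamma d =
 sumR m (fun i => / (2*sigma2 i) * sumR S (fun s => sumR (ns s) (fun j => (x s i j - theta mu gamma s i - d s j)^2)))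
 + sumR m (fun i => alpha i * ind_pos (sumR (S - 1) (fun s' => Rabs (gamma (s'+1)%nat i)))).
Proof.
  intros HS. unfold objective. f_equal. apply sumR_ext; intros i Hi. f_equal.
  destruct S as [|S0]; [lia|]. rewrite sumR_shift. replace (S S0 - 1)%nat with S0 by lia.
  f_equal.
  - apply sumR_ext; intros; unfold theta; f_equal; ring.
  - apply sumR_ext; intros s' _. replace (s' + 1)%nat with (S s') by lia.
    apply sumR_ext; intros; unfold theta; f_equal; ring.
Qed.

Lemma decomp S m ns x sigma2 mu gamma d : (1 <= m)%nat -> (forall s, (s < S)%nat -> (1 <= ns s)%nat) ->
 (forall i, (i < m)%nat -> 0 < sigma2 i) ->
 sumR m (fun i => / (2*sigma2 i) * sumR S (fun s => sumR (ns s) (fun j => (x s i j - theta mu gamma s i - d s j)^2)))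
 = sumR m (fun i => / (2*sigma2 i) * sumR S (fun s => sumR (ns s) (fun j => (x s i j - muprime m ns x sigma2 s i - dprime m x sigma2 s j)^2)))
 + sumR m (fun i => / (2*sigma2 i) * sumR S (fun s => sumR (ns s) (fun j => ((muprime m ns x sigma2 s i - theta mu gamma s i) - (d s j - dprime m x sigma2 s j))^2))).
Proof.
  intros Hm Hns Hsig.
  set (E := fun s i j => x s i j - muprime m ns x sigma2 s i - dprime m x sigma2 s j).
  set (U := fun s i => muprime m ns x sigma2 s i - theta mu gamma s i).
  set (V := fun s j => d s j - dprime m x sigma2 s j).
  assert (HC : sumR m (fun i => / (2*sigma2 i) * sumR S (fun s => sumR (ns s) (fun j => E s i j * (U s i - V s j))))= 0).
  { apply cross_zero.
    - intros s i Hs Hi. apply F1. auto.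
    - intros s j Hs. rewrite (sumR_ext _ _ (fun i => / 2 * (/ sigma2 i * E s i j))).
      2:{ intros i Hi. assert (0 < sigma2 i) by auto. unfold E. field. lra. }
      rewrite sumR_scal. unfold E. rewrite F2; auto. ring. apply Wpos; auto. }
  transitivity (sumR m (fun i => / (2*sigma2 i) * sumR S (fun s => sumR (ns s) (fun j => E s i j ^2)))
   + 2 * sumR m (fun i => / (2*sigma2 i) * sumR S (fun s => sumR (ns s) (fun j => E s i j * (U s i - V s j))))
   + sumR m (fun i => / (2*sigma2 i) * sumR S (fun s => sumR (ns s) (fun j => (U s i - V s j)^2)))).
  2:{ rewrite HC. unfold E, U, V. ring. }
  rewrite (sumR_ext m _ (fun i =>
     / (2*sigma2 i) * sumR S (fun s => sumR (ns s) (fun j => E s i j ^2))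
   + 2 * (/ (2*sigma2 i) * sumR S (fun s => sumR (ns s) (fun j => E s i j * (U s i - V s j))))
   + / (2*sigma2 i) * sumR S (fun s => sumR (ns s) (fun j => (U s i - V s j)^2)))).
  { rewrite !sumR_plus, sumR_scal. reflexivity. }
  intros i Hi.
  rewrite (sumR_ext S _ (fun s => sumR (ns s) (fun j => E s i j ^2) + 2 * sumR (ns s) (fun j => E s i j * (U s i - V s j))
          + sumR (ns s) (fun j => (U s i - V s j)^2))).
  { rewrite !sumR_plus, sumR_scal. ring. }
  intros s Hs.
  rewrite (sumR_ext (ns s) _ (fun j => E s i j ^2 + 2 * (E s i j * (U s i - V s j)) + (U s i - V s j)^2)).
  { rewrite !sumR_plus, sumR_scal. reflexivity. }
  intros j Hj. unfold E, U, V. ring.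
Qed.

Lemma min_lb SS (nn a gam : nat -> R) M c al :
 (forall s, (s < SS)%nat -> 0 <= nn s) -> 0 < sumR SS nn -> 0 < c ->
 Rmin (c * (sumR SS (fun s => nn s * a s ^ 2) - / sumR SS nn * (sumR SS (fun s => nn s * a s))^2)) al
 <= c * sumR SS (fun s => nn s * (a s - M - match s with O => 0 | _ => gam s end)^2)
    + al * ind_pos (sumR (SS-1) (fun s' => Rabs (gam (s'+1)%nat))).
Proof.
  intros Hnn HN Hc.
  assert (H0 : 0 <= sumR SS (fun s => nn s * (a s - M - match s with O => 0 | _ => gam s end)^2)).
  { apply sumR_nonneg; intros. apply Rmult_le_pos; auto. apply pow2_ge_0. }
  unfold ind_pos. destruct (Rlt_dec 0 _) as [Hp|Hp].
  - assert (Rmin (c * (sumR SS (fun s => nn s * a s ^ 2) - / sumR SS nn * (sumR SS (fun s => nn s * a s))^2)) al <= al)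
      by apply Rmin_r.
    assert (0 <= c * sumR SS (fun s => nn s * (a s - M - match s with O => 0 | _ => gam s end)^2)) by (apply Rmult_le_pos; lra).
    lra.
  - assert (Hz : forall s, (1 <= s)%nat -> (s < SS)%nat -> gam s = 0).
    { intros s H1 H2. destruct s as [|s']; [lia|].
      assert (Habs : Rabs (gam (s' + 1)%nat) <= sumR (SS-1) (fun s' => Rabs (gam (s'+1)%nat))).
      { apply (sumR_ge_term (SS-1) (fun s' => Rabs (gam (s'+1)%nat))). intros; apply Rabs_pos. lia. }
      replace (s' + 1)%nat with (S s') in Habs by lia.
      assert (0 <= Rabs (gam (S s'))) by apply Rabs_pos.
      destruct (Req_dec (gam (S s')) 0); auto. assert (0 < Rabs (gam (S s'))) by (apply Rabs_pos_lt; auto). lra. }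
    rewrite (sumR_ext SS (fun s => nn s * (a s - M - match s with O => 0 | _ => gam s end)^2) (fun s => nn s * (a s - M)^2)).
    2:{ intros s Hs. destruct s as [|s']; simpl; [ring|]. rewrite Hz by lia. ring. }
    eapply Rle_trans; [apply Rmin_l|].
    rewrite Rmult_0_r, Rplus_0_r. apply Rmult_le_compat_l; [lra|]. apply quad_lb; auto.
Qed.

Lemma ntot_pos SS (ns : nat -> nat) : (1 <= SS)%nat -> (forall s, (s < SS)%nat -> (1 <= ns s)%nat) ->
  0 < ntot SS ns.
Proof.
  intros H1 H2. unfold ntot. destruct SS as [|S0]; [lia|]. rewrite sumR_shift.
  assert (0 < INR (ns 0%nat)) by (apply lt_0_INR; specialize (H2 0%nat); lia).
  assert (0 <= sumR S0 (fun k => INR (ns (S k)))) by (apply sumR_nonneg; intros; apply pos_INR). lra.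
Qed.

Lemma ind_le1 a : ind_pos a <= 1.
Proof. unfold ind_pos; destruct (Rlt_dec 0 a); lra. Qed.

Lemma upper_i SS m ns x sigma2 alpha D i :
  (1 <= SS)%nat -> (forall s, (s < SS)%nat -> (1 <= ns s)%nat) -> 0 < sigma2 i -> 0 < alpha i ->
  / (2*sigma2 i) * sumR SS (fun s => sumR (ns s) (fun j =>
     ((muprime m ns x sigma2 s i - theta (mu_hat SS m ns x sigma2 alpha D) (gamma_hat SS m ns x sigma2 alpha D) s i)
      - (d_hat m x sigma2 D s j - dprime m x sigma2 s j))^2))
  + alpha i * ind_pos (sumR (SS-1) (fun s' => Rabs (gamma_hat SS m ns x sigma2 alpha D (s'+1)%nat i)))
  <= Rmin (g_i SS m ns x sigma2 i D) (alpha i).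
Proof.
  intros H1 Hns Hs Ha.
  rewrite (sumR_ext SS _ (fun s => INR (ns s) * (muprime m ns x sigma2 s i
       - theta (mu_hat SS m ns x sigma2 alpha D) (gamma_hat SS m ns x sigma2 alpha D) s i - dconv D s)^2)).
  2:{ intros s Hs'. rewrite <- sumR_const. apply sumR_ext; intros; unfold d_hat; f_equal; ring. }
  assert (Hc : 0 < / (2 * sigma2 i)) by (apply Rinv_0_lt_compat; lra).
  unfold theta, mu_hat, gamma_hat.
  destruct (Rlt_dec (g_i SS m ns x sigma2 i D) (alpha i)) as [Hl|Hl].
  - rewrite Rmin_left by lra.
    rewrite (sumR_zero (SS-1) (fun s' => Rabs 0)) by (intros; apply Rabs_R0).
    unfold ind_pos at 1. destruct (Rlt_dec 0 0); [lra|].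
    rewrite Rmult_0_r, Rplus_0_r.
    set (Mh := / ntot SS ns * sumR SS (fun s => INR (ns s) * (muprime m ns x sigma2 s i - dconv D s))).
    rewrite (sumR_ext SS _ (fun s => INR (ns s) * ((muprime m ns x sigma2 s i - dconv D s) - Mh)^2)).
    2:{ intros s _. destruct s; simpl; ring. }
    unfold Mh, ntot. rewrite quad_eq. unfold g_i, ntot. lra.
    apply (ntot_pos SS ns); auto.
  - rewrite Rmin_right by lra.
    rewrite (sumR_zero SS).
    2:{ intros s _. destruct s; simpl; ring. }
    assert (H := ind_le1 (sumR (SS - 1) (fun s' => Rabs (muprime m ns x sigma2 (s' + 1) i - muprime m ns x sigma2 0 i - dconv D (s' + 1))))).
    nra.
Qed.

Definition Vb m ns x sigma2 (d : nat -> nat -> R) (s : nat) : R :=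
  / INR (ns s) * sumR (ns s) (fun j => d s j - dprime m x sigma2 s j).

Lemma lower_i SS m ns x sigma2 alpha mu gamma d i :
  (1 <= SS)%nat -> (forall s, (s < SS)%nat -> (1 <= ns s)%nat) -> 0 < sigma2 i ->
  Rmin (g_i SS m ns x sigma2 i (fun s => Vb m ns x sigma2 d s - Vb m ns x sigma2 d 0%nat)) (alpha i) <=
  / (2*sigma2 i) * sumR SS (fun s => sumR (ns s) (fun j =>
     ((muprime m ns x sigma2 s i - theta mu gamma s i) - (d s j - dprime m x sigma2 s j))^2))
  + alpha i * ind_pos (sumR (SS-1) (fun s' => Rabs (gamma (s'+1)%nat i))).
Proof.
  intros H1 Hns Hs.
  assert (Hc : 0 < / (2 * sigma2 i)) by (apply Rinv_0_lt_compat; lra).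
  eapply Rle_trans; [| apply Rplus_le_compat_r; apply Rmult_le_compat_l; [lra|apply sumR_le; intros s Hs';
     apply (var_lb (ns s) (muprime m ns x sigma2 s i - theta mu gamma s i) (fun j => d s j - dprime m x sigma2 s j)); auto]].
  set (D' := fun s => Vb m ns x sigma2 d s - Vb m ns x sigma2 d 0%nat).
  rewrite (sumR_ext SS (fun s => INR (ns s) * (muprime m ns x sigma2 s i - theta mu gamma s i
       - / INR (ns s) * sumR (ns s) (fun j => d s j - dprime m x sigma2 s j)) ^ 2)
     (fun s => INR (ns s) * ((muprime m ns x sigma2 s i - dconv D' s) - (mu i + Vb m ns x sigma2 d 0%nat)
        - match s with O => 0 | _ => gamma s i end)^2)).
  2:{ intros s _. unfold D', theta, Vb. destruct s; simpl; ring. }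
  unfold g_i, ntot.
  apply (min_lb SS (fun s => INR (ns s)) (fun s => muprime m ns x sigma2 s i - dconv D' s) (fun s => gamma s i)).
  - intros; apply pos_INR.
  - apply (ntot_pos SS ns); auto.
  - auto.
Qed.

Theorem proposition1
  (S m : nat) (ns : nat -> nat) (x : nat -> nat -> nat -> R)
  (sigma2 alpha : nat -> R)
  (HS : (2 <= S)%nat) (Hm : (1 <= m)%nat)
  (Hns : forall s, (s < S)%nat -> (1 <= ns s)%nat)
  (Hsig : forall i, (i < m)%nat -> 0 < sigma2 i)
  (Halpha : forall i, (i < m)%nat -> 0 < alpha i)
  (D : nat -> R)
  (HDmin : forall D' : nat -> R,
      G S m ns x sigma2 alpha D <= G S m ns x sigma2 alpha D') :
  d_hat m x sigma2 D 0%nat 0%nat = 0 /\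
  forall (mu : nat -> R) (gamma : nat -> nat -> R) (d : nat -> nat -> R),
    d 0%nat 0%nat = 0 ->
    objective S m ns x sigma2 alpha
      (mu_hat S m ns x sigma2 alpha D)
      (gamma_hat S m ns x sigma2 alpha D)
      (d_hat m x sigma2 D)
    <= objective S m ns x sigma2 alpha mu gamma d.
Proof.
  split.
  { unfold d_hat, dprime. simpl dconv.
    rewrite (sumR_zero m (fun i => (x 0%nat i 0%nat - x 0%nat i 0%nat) / sigma2 i)) by (intros; unfold Rdiv; ring).
    unfold Rdiv. ring. }
  intros mu gamma d _.
  rewrite !obj_reshape by lia. rewrite (decomp S m ns x sigma2 (mu_hat S m ns x sigma2 alpha D) (gamma_hat S m ns x sigma2 alpha D) (d_hat m x sigma2 D)) by auto.
  rewrite (decomp S m ns x sigma2 mu gamma d) by auto.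
  rewrite !Rplus_assoc. apply Rplus_le_compat_l.
  rewrite <- !sumR_plus.
  apply Rle_trans with (G S m ns x sigma2 alpha D).
  { unfold G. apply sumR_le; intros i Hi. apply upper_i; auto; lia. }
  apply Rle_trans with (G S m ns x sigma2 alpha (fun s => Vb m ns x sigma2 d s - Vb m ns x sigma2 d 0%nat)).
  { apply HDmin. }
  unfold G. apply sumR_le; intros i Hi. apply lower_i; auto; lia.
Qed.
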